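(* For a positive integer $n$ let $p_n=\frac{\sqrt{1+4n}+1}{2\sqrt{1+4n}}$, $q_n=\frac{\sqrt{1+4n}-1}{2\sqrt{1+4n}}$, $x_n=\frac{1-\sqrt{1+4n}}{\sqrt{4n}}$, $y_n=\frac{1+\sqrt{1+4n}}{\sqrt{4n}}$, and $\mu_n=p_n\delta_{x_n}+q_n\delta_{y_n}$. Then, with $\mu=\mu_1$, one has $\mu_n=D_{1/\sqrt n}\,\mu^{\uplus n}$ for every $n\ge1$, and $L(\mu_n,\mathbf{b})\ge\frac{1}{6\sqrt n}$.
   Context: For a Borel probability measure $\mu$ on $\mathbb{R}$ and $a>0$, $D_a\mu(B)=\mu(a^{-1}B)$. The Cauchy transform is $G_\mu(z)=\int_{\mathbb{R}}\frac{1}{z-t}\,d\mu(t)$ for $z\in\mathbb{C}^+$, $F_\mu=1/G_\mu$, $K_\mu(z)=z-F_\mu(z)$. The Boolean convolution $\mu\uplus\nu$ is the unique probability measure with $K_{\mu\uplus\nu}=K_\mu+K_\nu$ on $\mathbb{C}^+$; $\mu^{\uplus n}$ is the $n$-fold Boolean convolution power. $\mathbf{b}=\frac12\delta_{-1}+\frac12\delta_1$. The Lévy distance between probability measures with distribution functions $F,G$ is $L=\inf\{\epsilon>0: F(x-\epsilon)-\epsilon\le G(x)\le F(x+\epsilon)+\epsilon\ \forall x\in\mathbb{R}\}$. *)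

(* Defs.v *)
From Stdlib Require Import Reals Lra List.
Import ListNotations.
Open Scope R_scope.

Record Cx := mkCx { Re : R ; Im : R }.
Definition Cplus (u v : Cx) : Cx := mkCx (Re u + Re v) (Im u + Im v).
Definition Cminus (u v : Cx) : Cx := mkCx (Re u - Re v) (Im u - Im v).
Definition Cmult (u v : Cx) : Cx :=
  mkCx (Re u * Re v - Im u * Im v) (Re u * Im v + Im u * Re v).
Definition Cinv (u : Cx) : Cx :=
  mkCx (Re u / (Re u ^ 2 + Im u ^ 2)) (- Im u / (Re u ^ 2 + Im u ^ 2)).
Definition RtoC (r : R) : Cx := mkCx r 0.
Definition C0 : Cx := RtoC 0.

(** A finitely supported Borel probability measure on R is represented as a
    list of (weight, atom) pairs:  sum_i w_i delta_{a_i}. *)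
Definition dmeas := list (R * R).

(** Cauchy transform G_mu(z) = int 1/(z-t) dmu(t) = sum_i w_i / (z - a_i). *)
Definition cauchyG (mu : dmeas) (z : Cx) : Cx :=
  fold_right (fun wa acc => Cplus (Cmult (RtoC (fst wa)) (Cinv (Cminus z (RtoC (snd wa))))) acc)
    C0 mu.
Definition Ftrans (mu : dmeas) (z : Cx) : Cx := Cinv (cauchyG mu z).
Definition Ktrans (mu : dmeas) (z : Cx) : Cx := Cminus z (Ftrans mu z).

(** Dilation D_a mu (B) = mu (a^{-1} B): the atom t is moved to a t. *)
Definition dilate (a : R) (mu : dmeas) : dmeas :=
  map (fun wa => (fst wa, a * snd wa)) mu.

Definition distr (mu : dmeas) (x : R) : R :=
  fold_right (fun wa acc => (if Rle_dec (snd wa) x then fst wa else 0) + acc) 0 mu.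

(** eps belongs to the set whose infimum is the Levy distance L(mu,nu). *)
Definition levy_admissible (mu nu : dmeas) (eps : R) : Prop :=
  eps > 0 /\
  forall x : R, distr mu (x - eps) - eps <= distr nu x /\ distr nu x <= distr mu (x + eps) + eps.

Definition bern : dmeas := [(1/2, -1); (1/2, 1)].

Definition s_n (n : nat) : R := sqrt (1 + 4 * INR n).
Definition p_n (n : nat) : R := (s_n n + 1) / (2 * s_n n).
Definition q_n (n : nat) : R := (s_n n - 1) / (2 * s_n n).
Definition x_n (n : nat) : R := (1 - s_n n) / sqrt (4 * INR n).
Definition y_n (n : nat) : R := (1 + s_n n) / sqrt (4 * INR n).
Definition mu_n (n : nat) : dmeas := [(p_n n, x_n n); (q_n n, y_n n)].

(* Main.v *)
Require Import Defs.
From Stdlib Require Import Reals Lra List.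
Import ListNotations.
Open Scope R_scope.

Lemma K2 (s u v : R) : s > 0 -> v > 0 ->
  Ktrans [((s+1)/(2*s), (1-s)/2); ((s-1)/(2*s), (1+s)/2)] (mkCx u v)
  = mkCx ((s^2-1)/4 * (u-1)/((u-1)^2+v^2)) (-((s^2-1)/4) * v/((u-1)^2+v^2)).
Proof.
  intros Hs Hv.
  set (n := (s^2-1)/4).
  set (A := u^2 - v^2 - u - n). set (B := v*(2*u-1)).
  set (X := (u-1)*A + v*B). set (Y := v*A - (u-1)*B).
  set (N := A^2+B^2).
  assert (Hv2 : v^2 > 0) by (simpl; nra).
  assert (HD1 : (u - (1-s)/2)^2 + v^2 > 0) by (pose proof (pow2_ge_0 (u - (1-s)/2)); lra).
  assert (HD2 : (u - (1+s)/2)^2 + v^2 > 0) by (pose proof (pow2_ge_0 (u - (1+s)/2)); lra).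
  assert (HN : N = ((u - (1-s)/2)^2 + v^2) * ((u - (1+s)/2)^2 + v^2)).
  { unfold N, A, B, n; field. }
  assert (HNp : N > 0) by (rewrite HN; apply Rmult_lt_0_compat; lra).
  assert (HM : (u-1)^2+v^2 > 0) by (pose proof (pow2_ge_0 (u - 1)); lra).
  assert (HXY : X^2+Y^2 = ((u-1)^2+v^2)*N) by (unfold X, Y, N; ring).
  assert (Hc : cauchyG [((s+1)/(2*s), (1-s)/2); ((s-1)/(2*s), (1+s)/2)] (mkCx u v) = mkCx (X/N) (Y/N)).
  { unfold cauchyG, Cminus, Cinv, Cplus, Cmult, RtoC, C0; cbn [fold_right fst snd Re Im RtoC].
    rewrite !Rminus_0_r, !Rplus_0_r. f_equal; rewrite HN; unfold X, Y, A, B, n; field; repeat split; lra. }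
  unfold Ktrans, Ftrans; rewrite Hc.
  unfold Cminus, Cinv; cbn [Re Im].
  assert (HS : (X/N)^2 + (Y/N)^2 = ((u-1)^2+v^2)/N).
  { replace ((X/N)^2 + (Y/N)^2) with ((X^2+Y^2)/N^2) by (field; lra).
    rewrite HXY. field; lra. }
  rewrite HS. f_equal.
  - unfold X, A, B, n. field. lra.
  - unfold Y, A, B, n. field. lra.
Qed.

Lemma sqrt4n (r : R) : 0 <= r -> sqrt (4 * r) = 2 * sqrt r.
Proof.
  intros H. rewrite sqrt_mult by lra.
  replace 4 with (2*2) by lra. rewrite sqrt_square by lra. reflexivity.
Qed.

Lemma mu_form (n : nat) : (1 <= n)%nat ->
  dilate (sqrt (INR n)) (mu_n n) =
  [((s_n n+1)/(2*s_n n), (1-s_n n)/2); ((s_n n-1)/(2*s_n n), (1+s_n n)/2)].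
Proof.
  intros Hn. apply le_INR in Hn. simpl INR in Hn.
  assert (Hr : sqrt (INR n) > 0) by (apply sqrt_lt_R0; lra).
  unfold dilate, mu_n, x_n, y_n, p_n, q_n; cbn [map fst snd].
  rewrite sqrt4n by lra.
  f_equal; [|f_equal]; f_equal; field; lra.
Qed.

Lemma mu1_form :
  mu_n 1 = [((s_n 1+1)/(2*s_n 1), (1-s_n 1)/2); ((s_n 1-1)/(2*s_n 1), (1+s_n 1)/2)].
Proof.
  unfold mu_n, x_n, y_n, p_n, q_n. simpl INR.
  rewrite Rmult_1_r. replace 4 with (2*2) by lra. rewrite sqrt_square by lra.
  reflexivity.
Qed.

Lemma s_pos n : s_n n > 0.
Proof. unfold s_n. apply sqrt_lt_R0. pose proof (pos_INR n). lra. Qed.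

Lemma s_sq n : s_n n ^ 2 = 1 + 4 * INR n.
Proof. unfold s_n. rewrite <- Rsqr_pow2. apply Rsqr_sqrt. pose proof (pos_INR n). lra. Qed.

Theorem mainTheorem6 : forall n : nat, (1 <= n)%nat ->
  (forall z : Cx, Im z > 0 ->
     Ktrans (dilate (sqrt (INR n)) (mu_n n)) z = Cmult (RtoC (INR n)) (Ktrans (mu_n 1) z))
  /\
  (forall eps : R, levy_admissible (mu_n n) bern eps -> eps >= 1 / (6 * sqrt (INR n))).
Proof.
  intros n Hn. split.
  - intros [u v] Hv. cbn [Im] in Hv.
    rewrite mu_form by exact Hn. rewrite mu1_form.
    rewrite !K2 by (apply s_pos || exact Hv).
    rewrite !s_sq. unfold Cmult, RtoC; cbn [Re Im]. simpl INR.
    assert (HM : (u-1)^2+v^2 > 0) by (pose proof (pow2_ge_0 (u - 1)); nra).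
    f_equal; field; lra.
  - intros eps [Heps H].
    apply le_INR in Hn. simpl INR in Hn.
    set (r := sqrt (INR n)).
    assert (Hr : r >= 1).
    { unfold r. rewrite <- sqrt_1. apply Rle_ge, sqrt_le_1_alt. lra. }
    assert (Hrr : r * r = INR n) by (unfold r; apply sqrt_sqrt; lra).
    assert (Hs := s_sq n). assert (Hsp := s_pos n).
    assert (Hsb : s_n n <= 2 * r + 2/3) by nra.
    assert (Hx : x_n n = (1 - s_n n) / (2 * r)).
    { unfold x_n. rewrite sqrt4n by lra. reflexivity. }
    assert (Hy : y_n n = (1 + s_n n) / (2 * r)).
    { unfold y_n. rewrite sqrt4n by lra. reflexivity. }
    assert (Hxb : x_n n + 1 >= 1 / (6 * r)).
    { rewrite Hx. apply Rle_ge.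
      apply (Rmult_le_reg_r (6 * r)); [lra|].
      field_simplify; try lra. }
    destruct (Rle_dec (x_n n + 1) eps) as [Hle|Hlt]; [lra|].
    destruct (H (-1)) as [_ H2].
    unfold distr, bern, mu_n in H2; cbn [fold_right fst snd] in H2.
    destruct (Rle_dec (-1) (-1)) as [_|C]; [|lra].
    destruct (Rle_dec 1 (-1)) as [C|_]; [lra|].
    destruct (Rle_dec (x_n n) (-1 + eps)) as [C|_]; [lra|].
    assert (Hxy : x_n n < y_n n).
    { rewrite Hx, Hy. apply Rmult_lt_compat_r; [apply Rinv_0_lt_compat; lra | lra]. }
    destruct (Rle_dec (y_n n) (-1 + eps)) as [C|_]; [lra|].
    assert (1 / (6 * r) <= 1/6).
    { unfold Rdiv. rewrite !Rmult_1_l. apply Rinv_le_contravar; lra. }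
    lra.
Qed.
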